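(* For every integer $n\geq 2$, the operator $W_n^{*}$ on $H^2$ is densely Li-Yorke chaotic.
   Context: $H^2$ denotes the Hardy space of analytic functions $f(z)=\sum_{k\ge0}\hat f(k)z^k$ on the open unit disk with $\sum_{k}|\hat f(k)|^2<\infty$. For $n\in\mathbb{N}$, $W_n$ is the bounded operator on $H^2$ given by $W_nf(z)=(1+z+\cdots+z^{n-1})f(z^n)$, and $W_n^{*}$ is its adjoint. An operator $T$ on a Banach space $Y$ is densely Li-Yorke chaotic if there is an uncountable dense set $S\subseteq Y$ such that for all distinct $x,y\in S$, $\liminf_{k\to\infty}\|T^kx-T^ky\|=0$ and $\limsup_{k\to\infty}\|T^kx-T^ky\|=\infty$. *)

(* Defs.v *)
From Stdlib Require Import Reals.
From Coquelicot Require Import Coquelicot.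
Open Scope R_scope.

(* H^2 is identified with its Taylor-coefficient sequences
   f = sum_k a k z^k with sum_k |a k|^2 < oo. *)
Definition inH2 (a : nat -> C) : Prop :=
  ex_series (fun k => (Cmod (a k)) ^ 2).

Definition H2norm (a : nat -> C) : R :=
  sqrt (Series (fun k => (Cmod (a k)) ^ 2)).

Definition H2sub (a b : nat -> C) : nat -> C := fun k => Cminus (a k) (b k).

(* W_n f (z) = (1 + z + ... + z^(n-1)) f(z^n): the coefficient of z^(n*k+j),
   j < n, is a k, i.e. (W_n a) m = a (m / n). *)
Definition Wn (n : nat) (a : nat -> C) : nat -> C := fun m => a (Nat.div m n).

Definition is_adjoint_Wn (n : nat) (T : (nat -> C) -> (nat -> C)) : Prop :=
  (forall g, inH2 g -> inH2 (T g)) /\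
  (forall f g, inH2 f -> inH2 g ->
     exists l : C,
       is_series (fun k => Cmult (Wn n f k) (Cconj (g k))) l /\
       is_series (fun k => Cmult (f k) (Cconj (T g k))) l).

Definition uncountable (S : (nat -> C) -> Prop) : Prop :=
  ~ exists h : (nat -> C) -> nat,
      forall x y, S x -> S y -> h x = h y -> x = y.

Definition dense_in_H2 (S : (nat -> C) -> Prop) : Prop :=
  (forall x, S x -> inH2 x) /\
  forall f, inH2 f -> forall eps, 0 < eps ->
    exists s, S s /\ H2norm (H2sub f s) < eps.

Definition densely_LiYorke_chaotic (T : (nat -> C) -> (nat -> C)) : Prop :=
  exists S : (nat -> C) -> Prop,
    uncountable S /\ dense_in_H2 S /\
    forall x y, S x -> S y -> x <> y ->
      LimInf_seq (fun k => H2norm (H2sub (Nat.iter k T x) (Nat.iter k T y)))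
        = Finite 0 /\
      LimSup_seq (fun k => H2norm (H2sub (Nat.iter k T x) (Nat.iter k T y)))
        = p_infty.

(* Main.v *)
Require Import Defs.
From Stdlib Require Import Reals.
From Stdlib Require Import Lia Lra List Classical ClassicalEpsilon FunctionalExtensionality ZArith.
From Coquelicot Require Import Coquelicot.
Import ListNotations.
Open Scope R_scope.

Fixpoint rsum (f : nat -> R) (L : nat) : R :=
  match L with O => 0 | S L => rsum f L + f L end.

Lemma rsum_ext f g L : (forall j, (j < L)%nat -> f j = g j) -> rsum f L = rsum g L.
Proof. induction L; simpl; intros H; auto. rewrite IHL by (intros; apply H; lia). rewrite H by lia. auto. Qed.

Lemma rsum_plus f g L : rsum (fun j => f j + g j) L = rsum f L + rsum g L.
Proof. induction L; simpl; [lra|]. rewrite IHL. lra. Qed.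

Lemma rsum_minus f g L : rsum (fun j => f j - g j) L = rsum f L - rsum g L.
Proof. induction L; simpl; [lra|]. rewrite IHL. lra. Qed.

Lemma rsum_scal c f L : rsum (fun j => c * f j) L = c * rsum f L.
Proof. induction L; simpl; [lra|]. rewrite IHL. lra. Qed.

Lemma rsum_le f g L : (forall j, (j < L)%nat -> f j <= g j) -> rsum f L <= rsum g L.
Proof. induction L; simpl; intros H; [lra|]. assert (f L <= g L) by (apply H; lia).
 assert (rsum f L <= rsum g L) by (apply IHL; intros; apply H; lia). lra. Qed.

Lemma rsum_nonneg f L : (forall j, (j < L)%nat -> 0 <= f j) -> 0 <= rsum f L.
Proof. intros H. replace 0 with (rsum (fun _ => 0) L). apply rsum_le; auto.
 induction L; simpl; auto. rewrite IHL; [lra|]. intros; apply H; lia. Qed.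

Lemma rsum_zero f L : (forall j, (j < L)%nat -> f j = 0) -> rsum f L = 0.
Proof. induction L; simpl; intros H; auto. rewrite IHL by (intros; apply H; lia). rewrite H by lia. lra. Qed.

Lemma rsum_app f a b : rsum f (a + b) = rsum f a + rsum (fun j => f (a + j)%nat) b.
Proof. induction b; simpl. rewrite Nat.add_0_r; lra. rewrite Nat.add_succ_r. simpl. rewrite IHb. lra. Qed.

Lemma rsum_single f L i0 : (i0 < L)%nat -> (forall j, (j < L)%nat -> j <> i0 -> f j = 0) -> rsum f L = f i0.
Proof. induction L; simpl; intros H1 H2; [lia|].
 destruct (Nat.eq_dec i0 L).
 - subst. rewrite rsum_zero. lra. intros; apply H2; lia.
 - rewrite IHL by (try lia; intros; apply H2; lia). rewrite (H2 L) by lia. lra. Qed.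

Lemma rsum_mono f L L' : (forall j, 0 <= f j) -> (L <= L')%nat -> rsum f L <= rsum f L'.
Proof. intros H HL. replace L' with (L + (L' - L))%nat by lia. rewrite rsum_app.
 assert (0 <= rsum (fun j => f (L + j)%nat) (L' - L)) by (apply rsum_nonneg; auto). lra. Qed.

Lemma rsum_block f L m : rsum f (L * m) = rsum (fun k => rsum (fun j => f (L * k + j)%nat) L) m.
Proof. induction m; simpl. rewrite Nat.mul_0_r; auto.
 rewrite Nat.mul_succ_r, rsum_app, IHm. auto. Qed.

Lemma rsum_swap (F : nat -> nat -> R) I K :
  rsum (fun i => rsum (fun k => F i k) K) I = rsum (fun k => rsum (fun i => F i k) I) K.
Proof. induction I; simpl. rewrite rsum_zero; auto.
 rewrite IHI. rewrite <- rsum_plus. auto. Qed.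

Lemma rsum_const c L : rsum (fun _ => c) L = INR L * c.
Proof. induction L. simpl; lra. cbn [rsum]. rewrite IHL, S_INR. lra. Qed.

Lemma rsum_cs_aux f L x : 2 * rsum f L * x <= rsum (fun j => f j ^ 2) L + INR L * x ^ 2.
Proof. induction L. simpl; lra. cbn [rsum]. rewrite S_INR.
 assert (2 * f L * x <= f L ^ 2 + x ^ 2) by (pose proof (pow2_ge_0 (f L - x)); simpl in *; nra).
 replace (2 * (rsum f L + f L) * x) with (2 * rsum f L * x + 2 * f L * x) by ring.
 replace ((INR L + 1) * x ^ 2) with (INR L * x ^ 2 + x ^ 2) by ring. lra. Qed.

Lemma rsum_cs f L : (rsum f L) ^ 2 <= INR L * rsum (fun j => f j ^ 2) L.
Proof. induction L. simpl; lra. cbn [rsum]. rewrite S_INR.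
 pose proof (rsum_cs_aux f L (f L)).
 set (A := rsum f L) in *. set (Q := rsum (fun j => f j ^ 2) L) in *.
 replace ((A + f L) ^ 2) with (A ^ 2 + 2 * A * f L + f L ^ 2) by ring.
 replace ((INR L + 1) * (Q + f L ^ 2)) with (INR L * Q + (Q + INR L * f L ^ 2) + f L ^ 2) by ring.
 lra. Qed.

Lemma rsum_ind a b c L : (a <= b)%nat ->
  rsum (fun k => if (Nat.leb a k && Nat.ltb k b)%bool then c else 0) L = INR (Nat.min L b - Nat.min L a) * c.
Proof. intros Hab. induction L. simpl. lra. cbn [rsum]. rewrite IHL.
 destruct (Nat.leb a L) eqn:E1; destruct (Nat.ltb L b) eqn:E2; cbn [andb];
 apply Nat.leb_le in E1 || apply Nat.leb_gt in E1; apply Nat.ltb_lt in E2 || apply Nat.ltb_ge in E2.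
 - replace (Nat.min (S L) b - Nat.min (S L) a)%nat with (S (Nat.min L b - Nat.min L a)) by lia. rewrite S_INR. lra.
 - replace (Nat.min (S L) b - Nat.min (S L) a)%nat with ((Nat.min L b - Nat.min L a)%nat) by lia. lra.
 - replace (Nat.min (S L) b - Nat.min (S L) a)%nat with ((Nat.min L b - Nat.min L a)%nat) by lia. lra.
 - replace (Nat.min (S L) b - Nat.min (S L) a)%nat with ((Nat.min L b - Nat.min L a)%nat) by lia. lra.
Qed.

Lemma rsum_shift_ind M g K :
  rsum (fun k => if Nat.leb M k then g k else 0) K = rsum (fun j => g (M + j)%nat) (K - M).
Proof. destruct (Nat.le_gt_cases K M).
 - replace (K - M)%nat with O by lia. simpl. apply rsum_zero. intros j Hj.
   destruct (Nat.leb M j) eqn:E; auto. apply Nat.leb_le in E; lia.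
 - replace K with (M + (K - M))%nat at 1 by lia. rewrite rsum_app.
   rewrite rsum_zero. 2:{ intros j Hj. destruct (Nat.leb M j) eqn:E; auto. apply Nat.leb_le in E; lia. }
   rewrite Rplus_0_l. apply rsum_ext. intros j Hj. replace (Nat.leb M (M + j)) with true; auto.
   symmetry; apply Nat.leb_le; lia.
Qed.

Lemma geom_sum J : rsum (fun j => (/2) ^ j) J = 2 - 2 * (/2) ^ J.
Proof. induction J; simpl. lra. rewrite IHJ. lra. Qed.

Lemma sum_n_rsum (a : nat -> R) N : sum_n a N = rsum a (S N).
Proof. induction N. rewrite sum_O. simpl. lra. rewrite sum_Sn, IHN. simpl. unfold plus; simpl. lra. Qed.

Lemma ser_bound (a : nat -> R) B : (forall k, 0 <= a k) -> (forall K, rsum a K <= B) ->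
  ex_series a /\ Series a <= B.
Proof. intros H0 HB.
 assert (Hinc : forall N, sum_n a N <= sum_n a (S N)).
 { intros N. rewrite !sum_n_rsum. simpl. specialize (H0 (S N)). simpl in *. lra. }
 destruct (ex_finite_lim_seq_incr (sum_n a) B Hinc) as [l Hl].
 { intros N. rewrite sum_n_rsum. apply HB. }
 assert (Hs : is_series a l) by exact Hl.
 split. exists l; auto.
 rewrite (is_series_unique a l Hs).
 apply (is_lim_seq_le (sum_n a) (fun _ => B) l B); auto.
 intros N; rewrite sum_n_rsum; apply HB. apply is_lim_seq_const.
Qed.

Lemma ser_rsum_le (a : nat -> R) K : (forall k, 0 <= a k) -> ex_series a -> rsum a K <= Series a.
Proof. intros H0 [l Hl]. rewrite (is_series_unique a l Hl).
 destruct K. simpl. apply (is_lim_seq_incr_compare (sum_n a) l) with (n := O) in Hl.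
 rewrite sum_n_rsum in Hl. simpl in Hl. specialize (H0 O). lra.
 intros N. rewrite !sum_n_rsum. simpl. specialize (H0 (S N)). simpl in *. lra.
 rewrite <- sum_n_rsum. apply is_lim_seq_incr_compare; auto.
 intros N. rewrite !sum_n_rsum. simpl. specialize (H0 (S N)). simpl in *. lra.
Qed.

Lemma ser_term_le (a : nat -> R) k : (forall k, 0 <= a k) -> ex_series a -> a k <= Series a.
Proof. intros H0 H. eapply Rle_trans. 2: apply (ser_rsum_le a (S k)); auto. simpl.
 assert (0 <= rsum a k) by (apply rsum_nonneg; auto). lra. Qed.

Lemma ser_tail (a : nat -> R) eps : (forall k, 0 <= a k) -> ex_series a -> 0 < eps ->
  exists M, forall K, rsum (fun j => a (M + j)%nat) K <= eps.
Proof. intros H0 Hex He. pose proof (Series_correct a Hex) as Hl.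
 assert (Hl' : is_lim_seq (sum_n a) (Series a)) by exact Hl.
 apply is_lim_seq_spec in Hl'. destruct (Hl' (mkposreal eps He)) as [N HN].
 exists (S N). intros K. specialize (HN N (le_n _)). simpl in HN.
 rewrite sum_n_rsum in HN.
 pose proof (ser_rsum_le a (S N + K) H0 Hex). rewrite rsum_app in H.
 apply Rabs_lt_between in HN. lra.
Qed.

Lemma is_series_fin {K : AbsRing} {V : NormedModule K} (a : nat -> V) N :
  (forall m, (N < m)%nat -> a m = zero) -> is_series a (sum_n a N).
Proof. intros H. unfold is_series.
 apply (filterlim_ext_loc (fun _ => sum_n a N)). exists N. intros m Hm.
 induction Hm. auto. rewrite sum_Sn, H by lia. rewrite plus_zero_r. auto.
 apply filterlim_const.
Qed.

Lemma sum_n_fst (a : nat -> C) N : fst (sum_n a N) = rsum (fun m => fst (a m)) (S N).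
Proof. induction N. rewrite sum_O. simpl. lra. rewrite sum_Sn.
 replace (rsum _ (S (S N))) with (rsum (fun m => fst (a m)) (S N) + fst (a (S N))) by reflexivity.
 rewrite <- IHN. reflexivity. Qed.
Lemma sum_n_snd (a : nat -> C) N : snd (sum_n a N) = rsum (fun m => snd (a m)) (S N).
Proof. induction N. rewrite sum_O. simpl. lra. rewrite sum_Sn.
 replace (rsum _ (S (S N))) with (rsum (fun m => snd (a m)) (S N) + snd (a (S N))) by reflexivity.
 rewrite <- IHN. reflexivity. Qed.

Definition ek (k : nat) : nat -> C := fun m => if Nat.eqb m k then RtoC 1 else RtoC 0.

Lemma Cmod_sq (z : C) : Cmod z ^ 2 = fst z ^ 2 + snd z ^ 2.
Proof. unfold Cmod. rewrite pow2_sqrt; auto. pose proof (pow2_ge_0 (fst z)); pose proof (pow2_ge_0 (snd z)); lra. Qed.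

Lemma inH2_ek k : inH2 (ek k).
Proof. unfold inH2. exists (sum_n (fun m => Cmod (ek k m) ^ 2) k). apply (@is_series_fin R_AbsRing R_NormedModule).
 intros m Hm. unfold ek. destruct (Nat.eqb_spec m k); [lia|]. rewrite Cmod_sq. simpl. unfold zero; simpl. ring. Qed.

Lemma div_sel (h : nat -> R) n k : (0 < n)%nat ->
  rsum (fun m => if Nat.eqb (m / n) k then h m else 0) (n * k + n) = rsum (fun j => h (n * k + j)%nat) n.
Proof. intros Hn. rewrite rsum_app. rewrite rsum_zero.
 - rewrite Rplus_0_l. apply rsum_ext. intros j Hj.
   replace ((n * k + j) / n)%nat with k. rewrite Nat.eqb_refl. auto.
   apply Nat.div_unique with j; lia.
 - intros j Hj. destruct (Nat.eqb_spec (j / n) k); auto.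
   exfalso. assert (j / n < k)%nat by (apply Nat.div_lt_upper_bound; lia). lia.
Qed.

Lemma T_formula n T g k : (0 < n)%nat -> is_adjoint_Wn n T -> inH2 g ->
  fst (T g k) = rsum (fun j => fst (g (n * k + j)%nat)) n /\
  snd (T g k) = rsum (fun j => snd (g (n * k + j)%nat)) n.
Proof. intros Hn [_ Hadj] Hg.
 destruct (Hadj (ek k) g (inH2_ek k) Hg) as [l [H1 H2]].
 set (t1 := fun m => Cmult (Wn n (ek k) m) (Cconj (g m))) in *.
 set (t2 := fun m => Cmult (ek k m) (Cconj (T g m))) in *.
 assert (E1 : l = sum_n t1 (n * k + n - 1)).
 { refine (@filterlim_locally_unique nat C_AbsRing C_NormedModule eventually _ (sum_n t1) l _ H1 _).
   apply (@is_series_fin C_AbsRing C_NormedModule).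
   intros m Hm. unfold t1, Wn, ek. destruct (Nat.eqb_spec (m / n) k).
   - exfalso. assert (S k <= m / n)%nat by (apply Nat.div_le_lower_bound; lia). lia.
   - unfold zero; simpl. unfold Cmult, RtoC; simpl. f_equal; ring. }
 assert (E2 : l = sum_n t2 k).
 { refine (@filterlim_locally_unique nat C_AbsRing C_NormedModule eventually _ (sum_n t2) l _ H2 _).
   apply (@is_series_fin C_AbsRing C_NormedModule).
   intros m Hm. unfold t2, ek. destruct (Nat.eqb_spec m k); [lia|].
   unfold zero; simpl. unfold Cmult, RtoC; simpl. f_equal; ring. }
 assert (F1 : fst l = rsum (fun j => fst (g (n * k + j)%nat)) n /\
              snd l = - rsum (fun j => snd (g (n * k + j)%nat)) n).
 { rewrite E1, sum_n_fst, sum_n_snd. replace (S (n * k + n - 1)) with (n * k + n)%nat by lia.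
   split.
   - rewrite (rsum_ext _ (fun m => if Nat.eqb (m / n) k then fst (g m) else 0)).
     apply div_sel; auto.
     intros j _. unfold t1, Wn, ek. destruct (Nat.eqb (j / n) k); simpl; ring.
   - rewrite (rsum_ext _ (fun m => -1 * (if Nat.eqb (m / n) k then snd (g m) else 0))).
     rewrite rsum_scal, div_sel; auto. ring.
     intros j _. unfold t1, Wn, ek. destruct (Nat.eqb (j / n) k); simpl; ring. }
 assert (F2 : fst l = fst (T g k) /\ snd l = - snd (T g k)).
 { rewrite E2, sum_n_fst, sum_n_snd. split.
   - rewrite (rsum_single _ _ k); [| lia |]. unfold t2, ek. rewrite Nat.eqb_refl. simpl. ring.
     intros j _ Hj. unfold t2, ek. destruct (Nat.eqb_spec j k); [lia|]. simpl. ring.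
   - rewrite (rsum_single _ _ k); [| lia |]. unfold t2, ek. rewrite Nat.eqb_refl. simpl. ring.
     intros j _ Hj. unfold t2, ek. destruct (Nat.eqb_spec j k); [lia|]. simpl. ring. }
 split; lra.
Qed.

Definition Bm (n m : nat) (u : nat -> R) (k : nat) : R :=
  rsum (fun j => u (n ^ m * k + j)%nat) (n ^ m).

Lemma iter_formula n T g m : (0 < n)%nat -> is_adjoint_Wn n T -> inH2 g ->
  inH2 (Nat.iter m T g) /\
  forall k, fst (Nat.iter m T g k) = Bm n m (fun l => fst (g l)) k /\
            snd (Nat.iter m T g k) = Bm n m (fun l => snd (g l)) k.
Proof. intros Hn Hadj Hg. induction m.
 - split; auto. intros k. unfold Bm. rewrite Nat.pow_0_r. cbn [rsum Nat.iter]. rewrite Nat.mul_1_l, Nat.add_0_r. simpl. split; ring.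
 - destruct IHm as [Hm1 Hm2]. simpl. split. apply (proj1 Hadj); auto.
   intros k. destruct (T_formula n T (Nat.iter m T g) k Hn Hadj Hm1) as [E1 E2].
   rewrite E1, E2. unfold Bm. rewrite Nat.pow_succ_r'.
   rewrite (Nat.mul_comm n (n ^ m)). rewrite !rsum_block.
   split; apply rsum_ext; intros i Hi; [rewrite (proj1 (Hm2 _)) | rewrite (proj2 (Hm2 _))];
   unfold Bm; apply rsum_ext; intros j Hj; do 2 f_equal; ring.
Qed.

Definition pp (i : nat) : nat := (4 * i * (i + 1))%nat.
Definition aa (n i : nat) : nat := (n ^ (pp i + 1))%nat.
Definition NN (n i : nat) : nat := (n ^ pp i)%nat.
Definition sgn (n i k : nat) : R :=
  if (Nat.leb (aa n i) k && Nat.ltb k (aa n i + NN n i))%bool then 1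
  else if (Nat.leb (aa n i + NN n i) k && Nat.ltb k (aa n i + 2 * NN n i))%bool then -1 else 0.
Definition cc (n i : nat) : R := / INR n ^ (pp i - i).
Definition V (n : nat) (g : nat -> R) (k : nat) : R :=
  rsum (fun i => g i * cc n i * sgn n i k) (S k).

Section Blocks.
Variable n : nat.
Hypothesis Hn : (2 <= n)%nat.

Lemma aa_bound i : (aa n i + 2 * NN n i <= n ^ (pp i + 2))%nat.
Proof. unfold aa, NN. rewrite !Nat.pow_add_r. simpl. rewrite !Nat.mul_1_r.
 set (X := (n ^ pp i)%nat). nia. Qed.

Lemma pp_mono i j : (i < j)%nat -> (pp i + 2 <= pp j + 1)%nat.
Proof. unfold pp. nia. Qed.

Lemma powle a b : (a <= b)%nat -> (n ^ a <= n ^ b)%nat.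
Proof. intros; apply Nat.pow_le_mono_r; lia. Qed.

Lemma sgn_support i k : sgn n i k <> 0 -> (aa n i <= k < aa n i + 2 * NN n i)%nat.
Proof. unfold sgn. destruct (Nat.leb (aa n i) k) eqn:E1, (Nat.ltb k (aa n i + NN n i)) eqn:E2,
 (Nat.leb (aa n i + NN n i) k) eqn:E3, (Nat.ltb k (aa n i + 2 * NN n i)) eqn:E4; simpl;
 try (intros H; exfalso; apply H; reflexivity);
 apply Nat.leb_le in E1 || apply Nat.leb_gt in E1; apply Nat.ltb_lt in E2 || apply Nat.ltb_ge in E2;
 apply Nat.leb_le in E3 || apply Nat.leb_gt in E3; apply Nat.ltb_lt in E4 || apply Nat.ltb_ge in E4;
 intros; lia. Qed.

Lemma sgn_lt_top i k : sgn n i k <> 0 -> (k < n ^ (pp i + 2))%nat.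
Proof. intros H. apply sgn_support in H. pose proof (aa_bound i). lia. Qed.

Lemma sgn_disj i j k : sgn n i k <> 0 -> sgn n j k <> 0 -> i = j.
Proof. intros Hi Hj. apply sgn_support in Hi as H1. apply sgn_support in Hj as H2.
 pose proof (aa_bound i). pose proof (aa_bound j).
 destruct (Nat.lt_total i j) as [Hl|[Hl|Hl]]; auto; exfalso.
 - pose proof (powle _ _ (pp_mono i j Hl)). unfold aa in *. lia.
 - pose proof (powle _ _ (pp_mono j i Hl)). unfold aa in *. lia.
Qed.

Lemma sgn_lt i k : sgn n i k <> 0 -> (i < S k)%nat.
Proof. intros H. apply sgn_support in H. unfold aa in H.
 pose proof (Nat.pow_gt_lin_r n (pp i + 1) ltac:(lia)). unfold pp in *. nia. Qed.

Lemma V_at g i k : sgn n i k <> 0 -> V n g k = g i * cc n i * sgn n i k.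
Proof. intros H. unfold V. apply (rsum_single (fun i => g i * cc n i * sgn n i k)). apply sgn_lt; auto.
 intros j _ Hj. destruct (Req_dec (sgn n j k) 0) as [E|E]. rewrite E; ring.
 exfalso. apply Hj. apply (sgn_disj j i k); auto. Qed.

Lemma V_zero g k : (forall i, g i <> 0 -> sgn n i k = 0) -> V n g k = 0.
Proof. intros H. unfold V. apply rsum_zero. intros j _.
 destruct (Req_dec (g j) 0) as [E|E]. rewrite E; ring. rewrite (H j E). ring. Qed.

Lemma V_minus g1 g2 k : V n (fun i => g1 i - g2 i) k = V n g1 k - V n g2 k.
Proof. unfold V. rewrite <- rsum_minus. apply rsum_ext. intros; ring. Qed.
Lemma V_plus g1 g2 k : V n (fun i => g1 i + g2 i) k = V n g1 k + V n g2 k.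
Proof. unfold V. rewrite <- rsum_plus. apply rsum_ext. intros; ring. Qed.

Lemma V_sq_le g k : V n g k ^ 2 <= rsum (fun i => (g i * cc n i * sgn n i k) ^ 2) (S k).
Proof. destruct (classic (exists i, sgn n i k <> 0)) as [[i Hi]|Hno].
 - rewrite (V_at g i k Hi).
   pose proof (sgn_lt i k Hi). rewrite (rsum_single (fun i => (g i * cc n i * sgn n i k) ^ 2) (S k) i); auto. lra.
   intros j _ Hj. destruct (Req_dec (sgn n j k) 0) as [E|E]. rewrite E; ring.
   exfalso. apply Hj. apply (sgn_disj j i k); auto.
 - rewrite V_zero. replace (0 ^ 2) with 0 by ring. apply rsum_nonneg. intros; apply pow2_ge_0.
   intros i _. destruct (Req_dec (sgn n i k) 0); auto. exfalso; apply Hno; eauto.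
Qed.

Lemma nr_ge2 : 2 <= INR n.
Proof. replace 2 with (INR 2) by (simpl; lra). apply le_INR; auto. Qed.

Lemma nr_pow_pos a : 0 < INR n ^ a.
Proof. apply pow_lt. pose proof nr_ge2; lra. Qed.

Lemma cc_NN i : cc n i * INR (NN n i) = INR n ^ i.
Proof. unfold cc, NN. rewrite pow_INR.
 replace (pp i) with (i + (pp i - i))%nat at 2 by (unfold pp; nia).
 rewrite pow_add. field. apply Rgt_not_eq, nr_pow_pos. Qed.

Lemma cc_sq_NN i : cc n i ^ 2 * INR (NN n i) = / INR n ^ (pp i - 2 * i).
Proof. unfold cc, NN. rewrite pow_INR.
 set (B := (pp i - 2 * i)%nat).
 assert (E1 : (pp i - i)%nat = (B + i)%nat) by (unfold B, pp; nia).
 assert (E2 : pp i = (B + i + i)%nat) by (unfold B, pp; nia).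
 rewrite E1. rewrite E2. rewrite !pow_add.
 pose proof (nr_pow_pos B). pose proof (nr_pow_pos i). field. split; lra. Qed.

Lemma w_bound N i : (N <= i)%nat ->
  / INR n ^ (pp i - 2 * i) <= / INR n ^ (4 * N * N + N) * (/ 2) ^ i.
Proof. intros HNi.
 replace (pp i - 2 * i)%nat with ((4 * N * N + N) + i + (pp i - 2 * i - (4 * N * N + N) - i))%nat by (unfold pp; nia).
 set (E := (4 * N * N + N)%nat). set (r := (pp i - 2 * i - E - i)%nat).
 rewrite !pow_add. rewrite pow_inv, <- Rinv_mult.
 apply Rinv_le_contravar. apply Rmult_lt_0_compat; [apply nr_pow_pos | apply pow_lt; lra].
 assert (2 ^ i <= INR n ^ i) by (apply pow_incr; pose proof nr_ge2; lra).
 assert (1 <= INR n ^ r).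
 { apply (Rle_trans _ (INR n ^ 0)). simpl; lra. apply Rle_pow. pose proof nr_ge2; lra. lia. }
 pose proof (nr_pow_pos E). pose proof (pow_lt 2 i ltac:(lra)).
 rewrite Rmult_assoc. apply Rmult_le_compat_l. lra. nra.
Qed.

Lemma VB g N : (forall i, Rabs (g i) <= 1) -> (forall i, (i < N)%nat -> g i = 0) ->
  forall K, rsum (fun k => V n g k ^ 2) K <= 4 * (/ 2) ^ N / INR n ^ (4 * N * N + N).
Proof. intros Hg1 Hg0 K.
 eapply Rle_trans. apply rsum_le. intros k Hk. apply V_sq_le.
 eapply Rle_trans. apply rsum_le. intros k Hk. apply (rsum_mono _ (S k) K). intros; apply pow2_ge_0. lia.
 rewrite <- rsum_swap.
 eapply Rle_trans. apply rsum_le. intros i Hi.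
 instantiate (1 := fun i => if Nat.leb N i then 2 * (/ INR n ^ (4 * N * N + N) * (/ 2) ^ i) else 0).
 cbv beta.
 destruct (Nat.leb_spec N i).
 - eapply Rle_trans. { apply rsum_le. intros k _.
   instantiate (1 := fun k => if (Nat.leb (aa n i) k && Nat.ltb k (aa n i + 2 * NN n i))%bool then cc n i ^ 2 else 0).
   cbv beta. rewrite !Rpow_mult_distr.
   assert (g i ^ 2 <= 1). { pose proof (Hg1 i) as Hgi. apply Rabs_le_between in Hgi. simpl. nra. }
   destruct (Req_dec (sgn n i k) 0) as [E|E].
   + rewrite E. destruct (_ && _)%bool; simpl; try lra. nra.
   + pose proof (sgn_support i k E). 
     replace (Nat.leb (aa n i) k && Nat.ltb k (aa n i + 2 * NN n i))%bool with true
       by (symmetry; apply andb_true_intro; split; [apply Nat.leb_le | apply Nat.ltb_lt]; lia).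
     assert (Hs1 : sgn n i k ^ 2 = 1). { unfold sgn in *. repeat destruct (_ && _)%bool; simpl in *; try lra. }
     rewrite Hs1. pose proof (pow2_ge_0 (cc n i)). nra. }
   rewrite rsum_ind by lia. 
   assert (INR (Nat.min K (aa n i + 2 * NN n i) - Nat.min K (aa n i)) <= 2 * INR (NN n i)).
   { replace (2 * INR (NN n i)) with (INR (2 * NN n i)) by (rewrite mult_INR; simpl; ring). apply le_INR. lia. }
   pose proof (pow2_ge_0 (cc n i)).
   eapply Rle_trans. apply Rmult_le_compat_r. auto. apply H0.
   replace (2 * INR (NN n i) * cc n i ^ 2) with (2 * (cc n i ^ 2 * INR (NN n i))) by ring.
   rewrite cc_sq_NN. apply Rmult_le_compat_l. lra. apply w_bound; auto.
 - rewrite rsum_zero. lra. intros k _. rewrite Hg0 by lia. simpl; ring.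
 - rewrite rsum_shift_ind.
   rewrite (rsum_ext _ (fun j => (2 * / INR n ^ (4 * N * N + N) * (/2) ^ N) * (/ 2) ^ j)).
   rewrite rsum_scal, geom_sum.
   pose proof (nr_pow_pos (4 * N * N + N)).
   pose proof (pow_lt (/2) N ltac:(lra)). pose proof (pow_lt (/2) (K - N) ltac:(lra)).
   assert (0 < / INR n ^ (4 * N * N + N)) by (apply Rinv_0_lt_compat; auto).
   unfold Rdiv. set (A := / INR n ^ (4 * N * N + N)) in *. set (B := (/ 2) ^ N) in *. set (C0 := (/ 2) ^ (K - N)) in *.
   assert (0 < A * B * C0) by (repeat apply Rmult_lt_0_compat; auto).
   replace (2 * A * B * (2 - 2 * C0)) with (4 * B * A - 4 * (A * B * C0)) by ring. lra.
   intros j _. rewrite (pow_add (/2) N j). ring.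
Qed.
End Blocks.

Section Core.
Variable n : nat.
Hypothesis Hn : (2 <= n)%nat.

Lemma Bm_vanish m h L : (forall k, (L <= k)%nat -> h k = 0) -> rsum h L = 0 -> (L <= n ^ m)%nat ->
  forall k, Bm n m h k = 0.
Proof. intros H0 Hs HL k. unfold Bm. destruct k.
 - rewrite (rsum_ext _ h) by (intros; f_equal; lia).
   replace (n ^ m)%nat with (L + (n ^ m - L))%nat by lia. rewrite rsum_app. rewrite Hs. rewrite rsum_zero. lra.
   intros j _. apply H0. lia.
 - apply rsum_zero. intros j _. apply H0. nia.
Qed.

Lemma Bm_plus m u w k : Bm n m (fun l => u l + w l) k = Bm n m u k + Bm n m w k.
Proof. unfold Bm. apply rsum_plus. Qed.

Lemma Bm_ext m u w k : (forall l, u l = w l) -> Bm n m u k = Bm n m w k.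
Proof. intros H. unfold Bm. apply rsum_ext. intros; auto. Qed.

Lemma Bm_cs m u K : rsum (fun k => Bm n m u k ^ 2) K <= INR (n ^ m) * rsum (fun l => u l ^ 2) (n ^ m * K).
Proof. rewrite rsum_block. rewrite <- rsum_scal. apply rsum_le. intros k _. unfold Bm. apply rsum_cs. Qed.

Lemma V_ext g1 g2 k : (forall i, g1 i = g2 i) -> V n g1 k = V n g2 k.
Proof. intros H. unfold V. apply rsum_ext. intros. rewrite H. auto. Qed.

Lemma sgn_split i k : sgn n i k =
  (if (Nat.leb (aa n i) k && Nat.ltb k (aa n i + NN n i))%bool then 1 else 0) -
  (if (Nat.leb (aa n i + NN n i) k && Nat.ltb k (aa n i + NN n i + NN n i))%bool then 1 else 0).
Proof. unfold sgn. replace (aa n i + 2 * NN n i)%nat with (aa n i + NN n i + NN n i)%nat by lia.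
 destruct (Nat.leb_spec (aa n i) k), (Nat.ltb_spec k (aa n i + NN n i)),
  (Nat.leb_spec (aa n i + NN n i) k), (Nat.ltb_spec k (aa n i + NN n i + NN n i)); simpl; try lra; lia. Qed.

Lemma sgn_sum i L : (aa n i + 2 * NN n i <= L)%nat -> rsum (sgn n i) L = 0.
Proof. intros HL. rewrite (rsum_ext _ (fun k => _ - _)) by (intros; apply sgn_split).
 rewrite rsum_minus, !rsum_ind by lia.
 replace (Nat.min L (aa n i + NN n i) - Nat.min L (aa n i))%nat with (NN n i) by lia.
 replace (Nat.min L (aa n i + NN n i + NN n i) - Nat.min L (aa n i + NN n i))%nat with (NN n i) by lia.
 ring. Qed.

Lemma V_sum g L : rsum (V n g) L = rsum (fun i => g i * cc n i * rsum (sgn n i) L) L.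
Proof. unfold V.
 rewrite (rsum_ext _ (fun k => rsum (fun i => g i * cc n i * sgn n i k) L)).
 - rewrite <- rsum_swap. apply rsum_ext. intros i _. rewrite <- rsum_scal. auto.
 - intros k Hk. replace L with (S k + (L - S k))%nat by lia. rewrite rsum_app.
   rewrite (rsum_zero (fun j => g (S k + j)%nat * cc n (S k + j) * sgn n (S k + j) k)). lra. intros j _.
   destruct (Req_dec (sgn n (S k + j) k) 0) as [E|E]. rewrite E; ring.
   apply sgn_lt in E; auto. lia.
Qed.

Lemma pow2_lin i : INR i + 1 <= 2 ^ i.
Proof. induction i. simpl; lra. rewrite S_INR. simpl. pose proof (pos_INR i). lra. Qed.

Lemma nat_lt_pow i : (i < n ^ i)%nat.
Proof. apply Nat.pow_gt_lin_r. lia. Qed.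

Variables (dr di : nat -> R) (L0 : nat) (g : nat -> R) (zr zi : nat -> R).
Hypothesis Hdr0 : forall k, (L0 <= k)%nat -> dr k = 0.
Hypothesis Hdi0 : forall k, (L0 <= k)%nat -> di k = 0.
Hypothesis Hdrs : rsum dr L0 = 0.
Hypothesis Hdis : rsum di L0 = 0.
Hypothesis Hg1 : forall i, Rabs (g i) <= 1.
Hypothesis Hzr : forall k, zr k = dr k + V n g k.
Hypothesis Hzi : forall k, zi k = di k.

Definition Useq (m : nat) : R := sqrt (Series (fun k => Bm n m zr k ^ 2 + Bm n m zi k ^ 2)).

Lemma rsum_fin (h : nat -> R) L : (forall k, (L0 <= k)%nat -> h k = 0) -> rsum h L0 = 0 -> (L0 <= L)%nat -> rsum h L = 0.
Proof. intros H1 H2 HL. replace L with (L0 + (L - L0))%nat by lia. rewrite rsum_app, H2, rsum_zero. lra.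
 intros; apply H1; lia. Qed.

Lemma core_liminf eps N0 : 0 < eps -> exists m, (N0 <= m)%nat /\ Useq m < eps.
Proof. intros He.
 assert (Hgeo : exists i, 4 * (/2) ^ (S i) < eps ^ 2).
 { assert (0 < eps ^ 2) by (apply pow_lt; auto).
   destruct (INR_archimed (eps ^ 2) 4 H) as [k Hk]. exists k.
   pose proof (pow2_lin (S k)). rewrite pow_inv. rewrite S_INR in H0.
   assert (0 < 2 ^ S k) by (apply pow_lt; lra).
   apply (Rmult_lt_reg_r (2 ^ S k)); auto. rewrite Rmult_assoc, Rinv_l by lra. nra. }
 destruct Hgeo as [i1 Hi1].
 set (i0 := (N0 + L0 + i1)%nat).
 set (m := (pp i0 + 2)%nat).
 exists m. split. unfold m, i0, pp. nia.
 set (gh := fun i => if Nat.leb i i0 then g i else 0).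
 set (gt := fun i => if Nat.leb i i0 then 0 else g i).
 set (h := fun k => dr k + V n gh k).
 assert (HL : (L0 <= n ^ m)%nat). { pose proof (nat_lt_pow m). unfold m, i0, pp in *. nia. }
 assert (Hh0 : forall k, (n ^ m <= k)%nat -> h k = 0).
 { intros k Hk. unfold h. rewrite Hdr0 by lia. rewrite V_zero; auto. lra.
   intros i Hi. unfold gh in Hi. destruct (Nat.leb_spec i i0); [|lra].
   destruct (Req_dec (sgn n i k) 0) as [E|E]; auto. apply sgn_lt_top in E; auto.
   pose proof (powle n Hn (pp i + 2) m ltac:(unfold m, pp; nia)). lia. }
 assert (Hhs : rsum h (n ^ m) = 0).
 { unfold h. rewrite rsum_plus. rewrite (rsum_fin dr) by auto. rewrite V_sum.
   rewrite rsum_zero. lra. intros i Hi. unfold gh. destruct (Nat.leb_spec i i0); [|ring].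
   rewrite sgn_sum; [ring|]. pose proof (aa_bound n Hn i).
   pose proof (powle n Hn (pp i + 2) m ltac:(unfold m, pp; nia)). lia. }
 assert (Hterm : forall k, Bm n m zr k ^ 2 + Bm n m zi k ^ 2 = Bm n m (V n gt) k ^ 2).
 { intros k. rewrite (Bm_ext m zi di) by auto.
   rewrite (Bm_vanish m di L0) by auto.
   rewrite (Bm_ext m zr (fun l => h l + V n gt l)).
   rewrite Bm_plus. rewrite (Bm_vanish m h (n ^ m)) by auto. ring.
   intros l. rewrite Hzr. unfold h. cbv beta. rewrite Rplus_assoc, <- V_plus. f_equal.
   apply V_ext. intros i. unfold gh, gt. destruct (Nat.leb i i0); ring. }
 unfold Useq. rewrite (Series_ext _ _ Hterm).
 set (Bd := INR (n ^ m) * (4 * (/ 2) ^ (S i0) / INR n ^ (4 * S i0 * S i0 + S i0))).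
 destruct (ser_bound (fun k => Bm n m (V n gt) k ^ 2) Bd) as [Hex Hser].
 { intros; apply pow2_ge_0. }
 { intros K. eapply Rle_trans. apply Bm_cs. apply Rmult_le_compat_l. apply pos_INR.
   apply VB; auto. intros i. unfold gt. destruct (Nat.leb i i0). rewrite Rabs_R0; lra. auto.
   intros i Hi. unfold gt. destruct (Nat.leb_spec i i0); auto. lia. }
 assert (HBd : Bd <= 4 * (/2) ^ (S i1)).
 { unfold Bd. rewrite pow_INR. unfold Rdiv.
   assert (INR n ^ m <= INR n ^ (4 * S i0 * S i0 + S i0)).
   { apply Rle_pow. pose proof (nr_ge2 n Hn); lra. unfold m, pp; nia. }
   pose proof (nr_pow_pos n Hn m). pose proof (nr_pow_pos n Hn (4 * S i0 * S i0 + S i0)).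
   assert ((/2) ^ (S i0) <= (/2) ^ (S i1)).
   { rewrite !pow_inv. apply Rinv_le_contravar. apply pow_lt; lra. apply Rle_pow. lra. unfold i0; lia. }
   pose proof (pow_lt (/2) (S i0) ltac:(lra)).
   replace (INR n ^ m * (4 * (/ 2) ^ S i0 * / INR n ^ (4 * S i0 * S i0 + S i0))) with
     (4 * (/ 2) ^ S i0 * (INR n ^ m / INR n ^ (4 * S i0 * S i0 + S i0))) by (field; lra).
   assert (INR n ^ m / INR n ^ (4 * S i0 * S i0 + S i0) <= 1).
   { unfold Rdiv. apply (Rmult_le_reg_r (INR n ^ (4 * S i0 * S i0 + S i0))); auto.
     rewrite Rmult_assoc, Rinv_l by lra. lra. }
   nra. }
 assert (Hs0 : 0 <= Series (fun k => Bm n m (V n gt) k ^ 2)).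
 { apply Rle_trans with (Bm n m (V n gt) 0 ^ 2). apply pow2_ge_0.
   apply (ser_term_le (fun k => Bm n m (V n gt) k ^ 2) 0%nat). intros; apply pow2_ge_0.
   auto. }
 rewrite <- (sqrt_pow2 eps) by lra. apply sqrt_lt_1; auto. apply pow2_ge_0. lra.
Qed.

Variable C0 : R.
Hypothesis Hbound : forall K, rsum (fun k => zr k ^ 2 + zi k ^ 2) K <= C0.
Hypothesis Hinf : forall N0, exists i, (N0 <= i)%nat /\ Rabs (g i) = 1.

Lemma core_ex m : ex_series (fun k => Bm n m zr k ^ 2 + Bm n m zi k ^ 2).
Proof. apply (ser_bound _ (INR (n ^ m) * C0)).
 intros k. pose proof (pow2_ge_0 (Bm n m zr k)). pose proof (pow2_ge_0 (Bm n m zi k)). lra.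
 intros K. rewrite rsum_plus. pose proof (Bm_cs m zr K). pose proof (Bm_cs m zi K).
 pose proof (Hbound (n ^ m * K)). rewrite rsum_plus in H1.
 pose proof (pos_INR (n ^ m)). nra. Qed.

Lemma core_limsup M0 N0 : exists m, (N0 <= m)%nat /\ M0 < Useq m.
Proof.
 destruct (INR_archimed 1 M0 ltac:(lra)) as [k Hk].
 destruct (Hinf (N0 + L0 + k)) as [i [Hi Hgi]].
 exists (pp i). split. unfold pp; nia.
 assert (Hval : Bm n (pp i) zr n = INR (NN n i) * (g i * cc n i)).
 { unfold Bm. rewrite (rsum_ext _ (fun _ => g i * cc n i)). rewrite rsum_const. reflexivity.
   intros j Hj. rewrite Hzr.
   assert (E : (n ^ pp i * n + j)%nat = (aa n i + j)%nat).
   { unfold aa. rewrite Nat.pow_add_r, Nat.pow_1_r. auto. }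
   rewrite E. pose proof (nat_lt_pow (pp i + 1)).
   rewrite Hdr0 by (unfold aa; unfold pp in *; nia).
   assert (Hs : sgn n i (aa n i + j) = 1).
   { unfold sgn. replace (Nat.leb (aa n i) (aa n i + j) && Nat.ltb (aa n i + j) (aa n i + NN n i))%bool with true. auto.
     symmetry. apply andb_true_intro. split. apply Nat.leb_le; lia. apply Nat.ltb_lt. unfold NN; lia. }
   rewrite (V_at n Hn g i) by lra. rewrite Hs. ring. }
 assert (Hg2 : g i ^ 2 = 1).
 { destruct (Rabs_pos (g i)). unfold Rabs in Hgi. destruct (Rcase_abs (g i)); nra. unfold Rabs in Hgi. destruct (Rcase_abs (g i)); nra. }
 assert (Hterm : (INR n ^ i) ^ 2 <= Series (fun k => Bm n (pp i) zr k ^ 2 + Bm n (pp i) zi k ^ 2)).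
 { eapply Rle_trans. 2: apply (ser_term_le (fun k => Bm n (pp i) zr k ^ 2 + Bm n (pp i) zi k ^ 2) n).
   rewrite Hval. rewrite <- (cc_NN n Hn i).
   replace ((INR (NN n i) * (g i * cc n i)) ^ 2) with (g i ^ 2 * (cc n i * INR (NN n i)) ^ 2) by ring.
   rewrite Hg2. pose proof (pow2_ge_0 (Bm n (pp i) zi n)). lra.
   intros k0. pose proof (pow2_ge_0 (Bm n (pp i) zr k0)). pose proof (pow2_ge_0 (Bm n (pp i) zi k0)). lra.
   apply core_ex. }
 unfold Useq. eapply Rlt_le_trans. 2: apply sqrt_le_1_alt; apply Hterm.
 rewrite sqrt_pow2 by (apply Rlt_le, nr_pow_pos; auto).
 assert (2 ^ i <= INR n ^ i) by (apply pow_incr; pose proof (nr_ge2 n Hn); lra).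
 pose proof (pow2_lin i). assert (INR k <= INR i) by (apply le_INR; lia). lra.
Qed.
End Core.

Fixpoint reads (tau : nat -> bool) (s : nat) (l : list nat) (e : nat) : Prop :=
  match l with
  | nil => e = s
  | x :: l' => (forall j, (j < x)%nat -> tau (s + j)%nat = true) /\ tau (s + x)%nat = false /\
               reads tau (S (s + x)) l' e
  end.

Lemma reads_det tau l : forall s e l' e', reads tau s l e -> reads tau s l' e' ->
  length l = length l' -> l = l' /\ e = e'.
Proof. induction l as [|x l IH]; intros s e l' e' H1 H2 Hlen; destruct l' as [|x' l']; simpl in *; try lia.
 - subst; auto.
 - destruct H1 as [A1 [B1 C1]]. destruct H2 as [A2 [B2 C2]].
   assert (x = x').
   { destruct (Nat.lt_total x x') as [Hl|[Hl|Hl]]; auto.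
     - rewrite A2 in B1 by auto. discriminate.
     - rewrite A1 in B2 by auto. discriminate. }
   subst x'. destruct (IH _ _ _ _ C1 C2) as [-> ->]; auto.
Qed.

Lemma reads_app tau l1 : forall l2 s e, reads tau s (l1 ++ l2) e -> exists m, reads tau s l1 m /\ reads tau m l2 e.
Proof. induction l1 as [|x l1 IH]; intros l2 s e H; simpl in *.
 - exists s; auto.
 - destruct H as [A [B C]]. destruct (IH _ _ _ C) as [m [H1 H2]]. exists m. auto.
Qed.

Definition enc (l : list nat) : list bool := flat_map (fun x => repeat true x ++ [false]) l.

Lemma reads_enc l : forall s tau, (forall j, (j < length (enc l))%nat -> tau (s + j)%nat = nth j (enc l) false) ->
  reads tau s l (s + length (enc l)).
Proof. induction l as [|x l IH]; intros s tau H; simpl in *.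
 - lia.
 - rewrite length_app, length_app, repeat_length in *. simpl in *.
   split; [|split].
   + intros j Hj. rewrite H by lia. rewrite <- app_assoc. rewrite app_nth1 by (rewrite repeat_length; lia).
     apply nth_repeat_lt; auto.
   + rewrite H by lia. rewrite <- app_assoc. rewrite app_nth2 by (rewrite repeat_length; lia).
     rewrite repeat_length, Nat.sub_diag. reflexivity.
   + replace (s + (x + 1 + length (enc l)))%nat with (S (s + x) + length (enc l))%nat by lia.
     apply IH. intros j Hj. replace (S (s + x) + j)%nat with (s + (x + S j))%nat by lia.
     rewrite H by lia. rewrite <- app_assoc. rewrite app_nth2 by (rewrite repeat_length; lia).
     rewrite repeat_length. replace (x + S j - x)%nat with (S j) by lia. reflexivity.
Qed.

Definition Rep (tau : nat -> bool) (M R' Lc N : nat) (vals : list nat) : Prop :=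
  exists e e', reads tau 0 [M; R'; Lc; N] e /\ reads tau e vals e' /\ length vals = (4 * M)%nat.

Lemma Rep_det tau M R' Lc N vals M2 R2 Lc2 N2 vals2 :
  Rep tau M R' Lc N vals -> Rep tau M2 R2 Lc2 N2 vals2 ->
  M = M2 /\ R' = R2 /\ Lc = Lc2 /\ N = N2 /\ vals = vals2.
Proof. intros [e [e' [H1 [H2 H3]]]] [f [f' [G1 [G2 G3]]]].
 destruct (reads_det _ _ _ _ _ _ H1 G1 eq_refl) as [E1 E2]. inversion E1. subst.
 destruct (reads_det _ _ _ _ _ _ H2 G2 ltac:(lia)) as [E3 E4]. subst. auto.
Qed.

Definition qr (R' : nat) (vals : list nat) (j : nat) : R :=
  (INR (nth (4 * j) vals O) - INR (nth (4 * j + 1) vals O)) / (INR R' + 1).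
Definition qi (R' : nat) (vals : list nat) (j : nat) : R :=
  (INR (nth (4 * j + 2) vals O) - INR (nth (4 * j + 3) vals O)) / (INR R' + 1).
Definition dfin (q : nat -> R) (M Lc k : nat) : R :=
  if Nat.ltb k M then q k else if Nat.ltb k (M + Lc + 1) then - rsum q M / (INR Lc + 1) else 0.

Lemma dfin_zero q M Lc k : (M + Lc + 1 <= k)%nat -> dfin q M Lc k = 0.
Proof. intros H. unfold dfin. destruct (Nat.ltb_spec k M); [lia|]. destruct (Nat.ltb_spec k (M + Lc + 1)); [lia|]. auto. Qed.

Lemma dfin_sum q M Lc : rsum (dfin q M Lc) (M + Lc + 1) = 0.
Proof. rewrite <- Nat.add_assoc, rsum_app.
 rewrite (rsum_ext (fun j => dfin q M Lc (M + j)%nat) (fun _ => - rsum q M / (INR Lc + 1))).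
 rewrite (rsum_ext (dfin q M Lc) q).
 rewrite rsum_const. rewrite plus_INR. simpl (INR 1). field. pose proof (pos_INR Lc); lra.
 - intros j Hj. unfold dfin. destruct (Nat.ltb_spec j M); [auto|lia].
 - intros j Hj. unfold dfin. destruct (Nat.ltb_spec (M + j) M); [lia|]. destruct (Nat.ltb_spec (M + j) (M + Lc + 1)); [auto|lia].
Qed.

Definition pi_ (i : nat) : nat := (i - 2 ^ Nat.log2 i)%nat.

Lemma pi_spec E j0 : (j0 < 2 ^ E)%nat -> pi_ (2 ^ E + j0) = j0.
Proof. intros H. unfold pi_. rewrite (Nat.log2_unique (2 ^ E + j0) E). lia. lia.
 rewrite Nat.pow_succ_r'. lia. Qed.

Definition gam (tau : nat -> bool) (N i : nat) : R :=
  if Nat.leb N i then (if tau (pi_ i) then 1 else 0) else 0.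

Definition elem (n : nat) (tau : nat -> bool) (M R' Lc N : nat) (vals : list nat) : nat -> C :=
  fun k => (dfin (qr R' vals) M Lc k + V n (gam tau N) k, dfin (qi R' vals) M Lc k).

Definition Sset (n : nat) (x : nat -> C) : Prop :=
  exists tau M R' Lc N vals, Rep tau M R' Lc N vals /\ x = elem n tau M R' Lc N vals.

Lemma rsum_fin_le (f : nat -> R) L K : (forall k, 0 <= f k) -> (forall k, (L <= k)%nat -> f k = 0) -> rsum f K <= rsum f L.
Proof. intros H0 H1. destruct (Nat.le_gt_cases K L). apply rsum_mono; auto.
 replace K with (L + (K - L))%nat by lia. rewrite rsum_app, (rsum_zero (fun j => f (L + j)%nat)). lra. intros; apply H1; lia. Qed.

Lemma gam_abs tau N i : Rabs (gam tau N i) <= 1.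
Proof. unfold gam. destruct (Nat.leb N i); [destruct (tau (pi_ i))|]; rewrite ?Rabs_R1, ?Rabs_R0; lra. Qed.

Section Elem.
Variable n : nat.
Hypothesis Hn : (2 <= n)%nat.

Lemma elem_bound tau M R' Lc N vals : exists B, forall K,
  rsum (fun k => Cmod (elem n tau M R' Lc N vals k) ^ 2) K <= B.
Proof. set (dr := dfin (qr R' vals) M Lc). set (di := dfin (qi R' vals) M Lc).
 exists (2 * rsum (fun k => dr k ^ 2) (M + Lc + 1) + 2 * 4 + rsum (fun k => di k ^ 2) (M + Lc + 1)).
 intros K. rewrite (rsum_ext _ (fun k => (dr k + V n (gam tau N) k) ^ 2 + di k ^ 2)).
 2:{ intros. rewrite Cmod_sq. reflexivity. }
 eapply Rle_trans. apply rsum_le. intros k _.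
 instantiate (1 := fun k => 2 * dr k ^ 2 + 2 * V n (gam tau N) k ^ 2 + di k ^ 2). cbv beta.
 pose proof (pow2_ge_0 (dr k - V n (gam tau N) k)).
 assert ((dr k + V n (gam tau N) k) ^ 2 = 2 * dr k ^ 2 + 2 * V n (gam tau N) k ^ 2 - (dr k - V n (gam tau N) k) ^ 2) by ring. lra.
 rewrite !rsum_plus, !rsum_scal.
 assert (rsum (fun k => dr k ^ 2) K <= rsum (fun k => dr k ^ 2) (M + Lc + 1)).
 { apply rsum_fin_le. intros; apply pow2_ge_0. intros k Hk. unfold dr. rewrite dfin_zero by lia. ring. }
 assert (rsum (fun k => di k ^ 2) K <= rsum (fun k => di k ^ 2) (M + Lc + 1)).
 { apply rsum_fin_le. intros; apply pow2_ge_0. intros k Hk. unfold di. rewrite dfin_zero by lia. ring. }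
 assert (rsum (fun k => V n (gam tau N) k ^ 2) K <= 4).
 { eapply Rle_trans. apply (VB n Hn _ 0). apply gam_abs. intros; lia. simpl. lra. }
 lra.
Qed.

Lemma bound_H2 (x : nat -> C) B : (forall K, rsum (fun k => Cmod (x k) ^ 2) K <= B) -> inH2 x.
Proof. intros H. apply (ser_bound _ B); auto. intros; apply pow2_ge_0. Qed.

End Elem.

Section Pair.
Variable n : nat.
Hypothesis Hn : (2 <= n)%nat.

Lemma dfin_sum_ext q M Lc L : (M + Lc + 1 <= L)%nat -> rsum (dfin q M Lc) L = 0.
Proof. intros H. replace L with ((M + Lc + 1) + (L - (M + Lc + 1)))%nat by lia.
 rewrite rsum_app, dfin_sum, (rsum_zero (fun j => dfin q M Lc (M + Lc + 1 + j)%nat)). lra.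
 intros; apply dfin_zero; lia. Qed.

Lemma pair_core tau M R' Lc N vals tau2 M2 R2 Lc2 N2 vals2 j0 :
  tau j0 <> tau2 j0 ->
  let x := elem n tau M R' Lc N vals in
  let y := elem n tau2 M2 R2 Lc2 N2 vals2 in
  let zr := fun l => fst (x l) - fst (y l) in
  let zi := fun l => snd (x l) - snd (y l) in
  (forall eps, 0 < eps -> forall N0, exists m, (N0 <= m)%nat /\ Useq n zr zi m < eps) /\
  (forall M0 N0, exists m, (N0 <= m)%nat /\ M0 < Useq n zr zi m).
Proof. intros Hj0 x y zr zi.
 set (dr := fun k => dfin (qr R' vals) M Lc k - dfin (qr R2 vals2) M2 Lc2 k).
 set (di := fun k => dfin (qi R' vals) M Lc k - dfin (qi R2 vals2) M2 Lc2 k).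
 set (L0 := Nat.max (M + Lc + 1) (M2 + Lc2 + 1)).
 set (g := fun i => gam tau N i - gam tau2 N2 i).
 assert (Hdr0 : forall k, (L0 <= k)%nat -> dr k = 0).
 { intros k Hk. unfold dr. rewrite !dfin_zero by lia. ring. }
 assert (Hdi0 : forall k, (L0 <= k)%nat -> di k = 0).
 { intros k Hk. unfold di. rewrite !dfin_zero by lia. ring. }
 assert (Hdrs : rsum dr L0 = 0).
 { unfold dr. rewrite rsum_minus, !dfin_sum_ext by lia. ring. }
 assert (Hdis : rsum di L0 = 0).
 { unfold di. rewrite rsum_minus, !dfin_sum_ext by lia. ring. }
 assert (Hg1 : forall i, Rabs (g i) <= 1).
 { intros i. unfold g, gam. destruct (Nat.leb N i), (Nat.leb N2 i); try destruct (tau (pi_ i)); try destruct (tau2 (pi_ i));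
   apply Rabs_le; lra. }
 assert (Hzr : forall k, zr k = dr k + V n g k).
 { intros k. unfold zr, x, y, elem, dr, g. simpl. rewrite V_minus. ring. }
 assert (Hzi : forall k, zi k = di k).
 { intros k. unfold zi, x, y, elem, di. simpl. ring. }
 split.
 - intros eps He Nz. exact (core_liminf n Hn dr di L0 g zr zi Hdr0 Hdi0 Hdrs Hdis Hg1 Hzr Hzi eps Nz He).
 - destruct (elem_bound n Hn tau M R' Lc N vals) as [Bx HBx].
   destruct (elem_bound n Hn tau2 M2 R2 Lc2 N2 vals2) as [By HBy].
   assert (Hbound : forall K, rsum (fun k => zr k ^ 2 + zi k ^ 2) K <= 2 * Bx + 2 * By).
   { intros K. specialize (HBx K). specialize (HBy K). fold x in HBx. fold y in HBy.
     eapply Rle_trans. apply rsum_le. intros k _.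
     instantiate (1 := fun k => 2 * Cmod (x k) ^ 2 + 2 * Cmod (y k) ^ 2). cbv beta.
     rewrite !Cmod_sq. unfold zr, zi.
     pose proof (pow2_ge_0 (fst (x k) + fst (y k))). pose proof (pow2_ge_0 (snd (x k) + snd (y k))).
     assert ((fst (x k) - fst (y k)) ^ 2 = 2 * fst (x k) ^ 2 + 2 * fst (y k) ^ 2 - (fst (x k) + fst (y k)) ^ 2) by ring.
     assert ((snd (x k) - snd (y k)) ^ 2 = 2 * snd (x k) ^ 2 + 2 * snd (y k) ^ 2 - (snd (x k) + snd (y k)) ^ 2) by ring.
     lra.
     rewrite rsum_plus, !rsum_scal. lra. }
   assert (Hinf : forall N0, exists i, (N0 <= i)%nat /\ Rabs (g i) = 1).
   { intros N1. set (E := (N1 + N + N2 + j0 + 1)%nat).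
     pose proof (Nat.pow_gt_lin_r 2 E ltac:(lia)).
     exists (2 ^ E + j0)%nat. split. lia.
     unfold g, gam. rewrite pi_spec by lia.
     replace (Nat.leb N (2 ^ E + j0)) with true by (symmetry; apply Nat.leb_le; lia).
     replace (Nat.leb N2 (2 ^ E + j0)) with true by (symmetry; apply Nat.leb_le; lia).
     destruct (tau j0), (tau2 j0); try congruence; rewrite ?Rminus_0_r, ?Rminus_0_l.
     rewrite Rabs_R1; auto. rewrite Rabs_Ropp, Rabs_R1; auto. }
   intros M0 Nz. exact (core_limsup n Hn dr L0 g zr zi Hdr0 Hzr _ Hbound Hinf M0 Nz).
Qed.

Lemma Useq_zero zr zi m : (forall l, zr l = 0) -> (forall l, zi l = 0) -> Useq n zr zi m = 0.
Proof. intros H1 H2. unfold Useq.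
 rewrite (Series_ext _ (fun _ => 0)).
 assert (Hs : is_series (fun _ : nat => 0) (sum_n (fun _ : nat => 0) 0)).
 { apply (@is_series_fin R_AbsRing R_NormedModule). intros; reflexivity. }
 rewrite sum_O in Hs. rewrite (is_series_unique _ _ Hs). apply sqrt_0.
 intros k. unfold Bm. rewrite !rsum_zero. simpl; ring. intros; auto. intros; auto. Qed.

End Pair.

Lemma Z_split z : INR (Z.to_nat z) - INR (Z.to_nat (- z)) = IZR z.
Proof. rewrite !INR_IZR_INZ, <- minus_IZR. f_equal. lia. Qed.

Definition rp (D x : R) : nat := Z.to_nat (up (x * D)).
Definition rm (D x : R) : nat := Z.to_nat (- up (x * D)).

Lemma round_err D x : 0 < D -> Rabs (x - (INR (rp D x) - INR (rm D x)) / D) <= / D.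
Proof. intros HD. unfold rp, rm. rewrite Z_split.
 destruct (archimed (x * D)) as [H1 H2].
 replace (x - IZR (up (x * D)) / D) with ((x * D - IZR (up (x * D))) / D) by (field; lra).
 unfold Rdiv. rewrite Rabs_mult, Rabs_inv, (Rabs_right D) by lra.
 rewrite <- (Rmult_1_l (/ D)) at 2. apply Rmult_le_compat_r. left; apply Rinv_0_lt_compat; auto.
 apply Rabs_le. lra.
Qed.

Lemma flat4_len (F : nat -> list nat) M : (forall j, length (F j) = 4%nat) ->
  length (flat_map F (seq 0 M)) = (4 * M)%nat.
Proof. intros H. induction M. auto. rewrite seq_S, flat_map_app, length_app, IHM. simpl.
 rewrite length_app, H. simpl. lia. Qed.

Lemma nth_flat4 (F : nat -> list nat) M j t : (forall j, length (F j) = 4%nat) -> (j < M)%nat -> (t < 4)%nat ->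
  nth (4 * j + t) (flat_map F (seq 0 M)) O = nth t (F j) O.
Proof. intros H. induction M; intros Hj Ht. lia.
 rewrite seq_S, flat_map_app. destruct (Nat.eq_dec j M).
 - subst. rewrite app_nth2; rewrite flat4_len by auto. 2: lia.
   replace (4 * M + t - 4 * M)%nat with t by lia. simpl. rewrite app_nil_r. auto.
 - rewrite (app_nth1 (flat_map F (seq 0 M))). apply IHM; lia. rewrite flat4_len by auto. lia.
Qed.

Section Dense.
Variable n : nat.
Hypothesis Hn : (2 <= n)%nat.

Lemma dense_part f : inH2 f -> forall eps, 0 < eps ->
  exists s, Sset n s /\ H2norm (H2sub f s) < eps.
Proof. intros Hf eps He.
 set (fr := fun k => fst (f k)). set (fi := fun k => snd (f k)).
 set (a := fun k => Cmod (f k) ^ 2).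
 assert (Ha : forall k, a k = fr k ^ 2 + fi k ^ 2) by (intros; unfold a; apply Cmod_sq).
 set (dl := eps ^ 2 / 16).
 assert (Hdl : 0 < dl) by (unfold dl; pose proof (pow_lt eps 2 He); lra).
 destruct (ser_tail a dl (fun k => pow2_ge_0 _) Hf Hdl) as [M HM].
 destruct (INR_archimed dl (2 * INR M) Hdl) as [R' HR'].
 set (D := INR R' + 1).
 assert (HD : 1 <= D) by (unfold D; pose proof (pos_INR R'); lra).
 set (F := fun j => [rp D (fr j); rm D (fr j); rp D (fi j); rm D (fi j)]).
 assert (HF : forall j, length (F j) = 4%nat) by reflexivity.
 set (vals := flat_map F (seq 0 M)).
 assert (Hlen : length vals = (4 * M)%nat) by (apply flat4_len; auto).
 assert (Hqr : forall j, (j < M)%nat -> Rabs (fr j - qr R' vals j) <= / D).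
 { intros j Hj. unfold qr. unfold vals. rewrite <- (Nat.add_0_r (4 * j)) at 1.
   rewrite !nth_flat4 by (auto; lia). simpl. apply round_err. lra. }
 assert (Hqi : forall j, (j < M)%nat -> Rabs (fi j - qi R' vals j) <= / D).
 { intros j Hj. unfold qi. unfold vals. rewrite !nth_flat4 by (auto; lia). simpl. apply round_err. lra. }
 set (Qr := rsum (qr R' vals) M). set (Qi := rsum (qi R' vals) M).
 destruct (INR_archimed dl (2 * (Qr ^ 2 + Qi ^ 2)) Hdl) as [Lc HLc].
 destruct (INR_archimed dl 4 Hdl) as [N HN].
 set (tau := fun j => nth j (enc ([M; R'; Lc; N] ++ vals)) false).
 assert (Hrep : Rep tau M R' Lc N vals).
 { pose proof (reads_enc ([M; R'; Lc; N] ++ vals) 0 tau (fun j _ => eq_refl)) as H.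
   destruct (reads_app _ _ _ _ _ H) as [m [H1 H2]]. exists m, (0 + length (enc ([M; R'; Lc; N] ++ vals)))%nat. auto. }
 set (s := elem n tau M R' Lc N vals).
 exists s. split. exists tau, M, R', Lc, N, vals. auto.
 set (dr := dfin (qr R' vals) M Lc). set (di := dfin (qi R' vals) M Lc).
 set (Vk := V n (gam tau N)).
 set (c1 := 2 * (/ D) ^ 2).
 set (c3 := 2 * (Qr ^ 2 + Qi ^ 2) / (INR Lc + 1) ^ 2).
 set (F1 := fun k => if (Nat.leb 0 k && Nat.ltb k M)%bool then c1 else 0).
 set (F2 := fun k => if Nat.leb M k then 2 * a k else 0).
 set (F3 := fun k => if (Nat.leb M k && Nat.ltb k (M + Lc + 1))%bool then c3 else 0).
 assert (HLc0 : 0 < INR Lc + 1) by (pose proof (pos_INR Lc); lra).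
 assert (HE : forall k, (fr k - dr k) ^ 2 + (fi k - di k) ^ 2 <= F1 k + F2 k + F3 k).
 { intros k. unfold F1, F2, F3, dr, di, dfin.
   destruct (Nat.ltb_spec k M).
   - replace (Nat.leb 0 k && true)%bool with true by (destruct (Nat.leb_spec 0 k); auto; lia).
     replace (Nat.leb M k) with false by (symmetry; apply Nat.leb_gt; lia). simpl.
     pose proof (Hqr k H). pose proof (Hqi k H).
     assert ((fr k - qr R' vals k) ^ 2 <= (/ D) ^ 2).
     { rewrite <- (pow2_abs (fr k - qr R' vals k)). apply pow_incr. split; auto. apply Rabs_pos. }
     assert ((fi k - qi R' vals k) ^ 2 <= (/ D) ^ 2).
     { rewrite <- (pow2_abs (fi k - qi R' vals k)). apply pow_incr. split; auto. apply Rabs_pos. }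
     unfold c1. lra.
   - replace (Nat.leb 0 k && false)%bool with false by (destruct (Nat.leb 0 k); auto).
     replace (Nat.leb M k) with true by (symmetry; apply Nat.leb_le; lia). simpl.
     pose proof (pow2_ge_0 (fr k)). pose proof (pow2_ge_0 (fi k)).
     destruct (Nat.ltb_spec k (M + Lc + 1)).
     + fold Qr Qi. rewrite Ha.
       set (u := Qr / (INR Lc + 1)). set (w := Qi / (INR Lc + 1)).
       replace (fr k - - Qr / (INR Lc + 1)) with (fr k + u) by (unfold u; field; lra).
       replace (fi k - - Qi / (INR Lc + 1)) with (fi k + w) by (unfold w; field; lra).
       assert (c3 = 2 * u ^ 2 + 2 * w ^ 2) by (unfold c3, u, w; field; lra).
       pose proof (pow2_ge_0 (fr k - u)). pose proof (pow2_ge_0 (fi k - w)).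
       assert ((fr k + u) ^ 2 = 2 * fr k ^ 2 + 2 * u ^ 2 - (fr k - u) ^ 2) by ring.
       assert ((fi k + w) ^ 2 = 2 * fi k ^ 2 + 2 * w ^ 2 - (fi k - w) ^ 2) by ring.
       lra.
     + rewrite Ha. lra. }
 assert (HS1 : forall K, rsum F1 K <= dl).
 { intros K. unfold F1. rewrite rsum_ind by lia.
   assert (INR (Nat.min K M - Nat.min K 0) <= INR M) by (apply le_INR; lia).
   assert (0 < c1) by (unfold c1; apply Rmult_lt_0_compat; [lra| apply pow_lt; apply Rinv_0_lt_compat; lra]).
   apply Rle_trans with (INR M * c1). apply Rmult_le_compat_r; lra.
   unfold c1. rewrite <- Rinv_pow by lra.
   assert (D <= D ^ 2) by (simpl; nra).
   assert (INR R' < D) by (unfold D; lra).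
   apply (Rmult_le_reg_r (D ^ 2)). nra.
   replace (INR M * (2 * / D ^ 2) * D ^ 2) with (2 * INR M) by (field; nra). nra. }
 assert (HS2 : forall K, rsum F2 K <= 2 * dl).
 { intros K. unfold F2. rewrite rsum_shift_ind. rewrite rsum_scal. specialize (HM (K - M)%nat). lra. }
 assert (HS3 : forall K, rsum F3 K <= dl).
 { intros K. unfold F3. rewrite rsum_ind by lia.
   assert (INR (Nat.min K (M + Lc + 1) - Nat.min K M) <= INR Lc + 1)
     by (replace (INR Lc + 1) with (INR (Lc + 1)) by (rewrite plus_INR; simpl; ring); apply le_INR; lia).
   assert (0 <= c3) by (unfold c3; apply Rmult_le_pos; [pose proof (pow2_ge_0 Qr); pose proof (pow2_ge_0 Qi); lra | left; apply Rinv_0_lt_compat, pow_lt; lra]).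
   apply Rle_trans with ((INR Lc + 1) * c3). apply Rmult_le_compat_r; lra.
   unfold c3. replace ((INR Lc + 1) * (2 * (Qr ^ 2 + Qi ^ 2) / (INR Lc + 1) ^ 2)) with (2 * (Qr ^ 2 + Qi ^ 2) / (INR Lc + 1)) by (field; lra).
   apply (Rmult_le_reg_r (INR Lc + 1)); auto. unfold Rdiv. rewrite Rmult_assoc, Rinv_l by lra. lra. }
 assert (HS4 : forall K, rsum (fun k => Vk k ^ 2) K <= dl).
 { intros K. eapply Rle_trans. apply (VB n Hn _ N). apply gam_abs.
   intros i Hi. unfold gam. destruct (Nat.leb_spec N i); auto; lia.
   pose proof (pow2_lin N). rewrite pow_inv.
   pose proof (nr_pow_pos n Hn (4 * N * N + N)).
   assert (1 <= INR n ^ (4 * N * N + N)).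
   { apply (Rle_trans _ (INR n ^ 0)). simpl; lra. apply Rle_pow. pose proof (nr_ge2 n Hn); lra. lia. }
   assert (0 < 2 ^ N) by (apply pow_lt; lra).
   unfold Rdiv. rewrite Rmult_assoc, <- Rinv_mult.
   apply (Rmult_le_reg_r (2 ^ N * INR n ^ (4 * N * N + N))). nra.
   rewrite Rmult_assoc, Rinv_l by nra.
   assert (dl * 2 ^ N >= dl * (INR N + 1)) by nra.
   assert (dl * 2 ^ N * INR n ^ (4 * N * N + N) >= dl * 2 ^ N) by nra.
   rewrite <- Rmult_assoc. lra. }
 assert (Hpt : forall k, Cmod (H2sub f s k) ^ 2 <= 2 * (F1 k + F2 k + F3 k) + 2 * Vk k ^ 2).
 { intros k. rewrite Cmod_sq. unfold H2sub. rewrite (fun a b => eq_refl : fst (Cminus a b) = fst a - fst b), (fun a b => eq_refl : snd (Cminus a b) = snd a - snd b).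
   change (fst (f k)) with (fr k). change (snd (f k)) with (fi k).
   change (fst (s k)) with (dr k + Vk k). change (snd (s k)) with (di k).
   pose proof (HE k). pose proof (pow2_ge_0 (fr k - dr k + Vk k)).
   assert ((fr k - (dr k + Vk k)) ^ 2 = 2 * (fr k - dr k) ^ 2 + 2 * Vk k ^ 2 - (fr k - dr k + Vk k) ^ 2) by ring.
   pose proof (pow2_ge_0 (fi k - di k)). lra. }
 assert (Hser : Series (fun k => Cmod (H2sub f s k) ^ 2) <= 10 * dl).
 { apply (ser_bound _ (10 * dl)). intros; apply pow2_ge_0.
   intros K. eapply Rle_trans. apply rsum_le. intros k _. apply Hpt.
   rewrite rsum_plus, !rsum_scal, !rsum_plus.
   pose proof (HS1 K). pose proof (HS2 K). pose proof (HS3 K). pose proof (HS4 K). lra. }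
 unfold H2norm. rewrite <- (sqrt_pow2 eps) by lra. apply sqrt_lt_1_alt. split.
 apply Rle_trans with (Cmod (H2sub f s 0) ^ 2). apply pow2_ge_0.
 apply (ser_term_le (fun k => Cmod (H2sub f s k) ^ 2) 0). intros; apply pow2_ge_0.
 apply (ser_bound _ (10 * dl)). intros; apply pow2_ge_0.
 intros K. eapply Rle_trans. apply rsum_le. intros k _. apply Hpt.
 rewrite rsum_plus, !rsum_scal, !rsum_plus.
 pose proof (HS1 K). pose proof (HS2 K). pose proof (HS3 K). pose proof (HS4 K). lra.
 unfold dl in Hser. pose proof (pow_lt eps 2 He). lra.
Qed.
End Dense.



Lemma cantor (G : (nat -> bool) -> nat) : (forall s s', G s = G s' -> forall j, s j = s' j) -> False.
Proof. intros HG.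
 set (F := fun k => match excluded_middle_informative (exists s, G s = k) with
   | left H => proj1_sig (constructive_indefinite_description _ H) | right _ => fun _ => false end).
 set (d := fun k => negb (F k k)).
 assert (HF : G (F (G d)) = G d).
 { unfold F. destruct (excluded_middle_informative _) as [H|H].
   exact (proj2_sig (constructive_indefinite_description _ H)). exfalso; apply H; exists d; auto. }
 pose proof (HG _ _ HF (G d)) as H.
 change (d (G d)) with (negb (F (G d) (G d))) in H.
 destruct (F (G d) (G d)); discriminate.
Qed.

Lemma fst_Cminus (a b : C) : fst (Cminus a b) = fst a - fst b. Proof. reflexivity. Qed.
Lemma snd_Cminus (a b : C) : snd (Cminus a b) = snd a - snd b. Proof. reflexivity. Qed.

Theorem mainTheorem16 :
  forall (n : nat), (2 <= n)%nat ->
  forall T : (nat -> C) -> (nat -> C),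
    is_adjoint_Wn n T -> densely_LiYorke_chaotic T.
Proof.
 intros n Hn T Hadj. assert (Hn0 : (0 < n)%nat) by lia.
 exists (Sset n). split; [|split].
 - intros [h Hh].
   set (ts := fun (s : nat -> bool) j => if Nat.ltb j 4 then false else s (j - 4)%nat).
   set (xs := fun s => elem n (ts s) 0 0 0 0 []).
   assert (HS : forall s, Sset n (xs s)).
   { intros s. exists (ts s), 0%nat, 0%nat, 0%nat, 0%nat, []. split; [|reflexivity].
     exists 4%nat, 4%nat. cbn. repeat split; intros; try lia; reflexivity. }
   apply (cantor (fun s => h (xs s))). intros s s' Heq j.
   apply Hh in Heq; auto.
   destruct (Bool.bool_dec (s j) (s' j)) as [E|E]; auto. exfalso.
   assert (E' : ts s (j + 4)%nat <> ts s' (j + 4)%nat).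
   { unfold ts. replace (Nat.ltb (j + 4) 4) with false by (symmetry; apply Nat.ltb_ge; lia).
     replace (j + 4 - 4)%nat with j by lia. auto. }
   destruct (pair_core n Hn (ts s) 0 0 0 0 [] (ts s') 0 0 0 0 [] (j + 4) E') as [_ Hsup].
   destruct (Hsup 0 O) as [m [_ Hm]].
   rewrite (Useq_zero n) in Hm. lra.
   + intros l. fold (xs s). fold (xs s'). rewrite Heq. ring.
   + intros l. fold (xs s). fold (xs s'). rewrite Heq. ring.
 - split.
   + intros x [tau [M [R' [Lc [N [vals [Hrep ->]]]]]]].
     destruct (elem_bound n Hn tau M R' Lc N vals) as [B HB]. apply (bound_H2 _ B HB).
   + apply dense_part; auto.
 - intros x y [tau [M [R' [Lc [N [vals [Hrep ->]]]]]]] [tau2 [M2 [R2 [Lc2 [N2 [vals2 [Hrep2 ->]]]]]]] Hxy.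
   destruct (classic (exists j0, tau j0 <> tau2 j0)) as [[j0 Hj0]|Hno].
   2:{ exfalso. assert (tau = tau2).
       { apply functional_extensionality. intros j. apply NNPP. intros C1. apply Hno. eauto. }
       subst tau2. destruct (Rep_det _ _ _ _ _ _ _ _ _ _ _ Hrep Hrep2) as [-> [-> [-> [-> ->]]]].
       apply Hxy; reflexivity. }
   destruct (pair_core n Hn tau M R' Lc N vals tau2 M2 R2 Lc2 N2 vals2 j0 Hj0) as [Hinf Hsup].
   set (x := elem n tau M R' Lc N vals) in *.
   set (y := elem n tau2 M2 R2 Lc2 N2 vals2) in *.
   assert (Hx2 : inH2 x).
   { destruct (elem_bound n Hn tau M R' Lc N vals) as [B HB]. apply (bound_H2 _ B HB). }
   assert (Hy2 : inH2 y).
   { destruct (elem_bound n Hn tau2 M2 R2 Lc2 N2 vals2) as [B HB]. apply (bound_H2 _ B HB). }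
   set (zr := fun l => fst (x l) - fst (y l)) in *.
   set (zi := fun l => snd (x l) - snd (y l)) in *.
   assert (Key : forall k, H2norm (H2sub (Nat.iter k T x) (Nat.iter k T y)) = Useq n zr zi k).
   { intros k. unfold H2norm, Useq. f_equal. apply Series_ext. intros l. rewrite Cmod_sq. unfold H2sub.
     destruct (iter_formula n T x k Hn0 Hadj Hx2) as [_ Ex].
     destruct (iter_formula n T y k Hn0 Hadj Hy2) as [_ Ey].
     rewrite fst_Cminus, snd_Cminus. rewrite (proj1 (Ex l)), (proj2 (Ex l)), (proj1 (Ey l)), (proj2 (Ey l)).
     unfold Bm, zr, zi. rewrite <- !rsum_minus. reflexivity. }
   split.
   + apply is_LimInf_seq_unique. intros eps. split.
     * intros N0. destruct (Hinf eps (cond_pos eps) N0) as [m [Hm1 Hm2]]. exists m. split; auto.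
       rewrite Key. lra.
     * exists O. intros m _. rewrite Key. unfold Useq. pose proof (sqrt_pos (Series (fun k => Bm n m zr k ^ 2 + Bm n m zi k ^ 2))).
       pose proof (cond_pos eps). lra.
   + apply is_LimSup_seq_unique. intros M0 N0. destruct (Hsup M0 N0) as [m [Hm1 Hm2]]. exists m. split; auto.
     rewrite Key. auto.
Qed.
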